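(* Let $\mathbf S$ be a specialization semilattice and let $\precsim$ and $\sim$ be the relations on $S\times S^{<\omega}$ defined in the context. Then: (i) $\precsim$ is reflexive and transitive, hence $\sim$ is an equivalence relation. (ii) The map $K[a,\{b_1,\dots,b_h\}]=[a,\{a\vee_S b_1\vee_S\cdots\vee_S b_h\}]$ is well defined on $\sim$-classes, i.e. if $(a,\{b_1,\dots,b_h\})\sim(c,\{d_1,\dots,d_k\})$ then $(a,\{a\vee_S b_1\vee_S\cdots\vee_S b_h\})\sim(c,\{c\vee_S d_1\vee_S\cdots\vee_S d_k\})$. (iii) $\sim$ is a congruence of the product semilattice $(S,\vee_S)\times(S^{<\omega},\cup)$, so the quotient $\widetilde S$ inherits a semilattice operation given by $[a,B]\vee[c,D]=[a\vee_S c,B\cup D]$; moreover, for the induced order $\le$ on $\widetilde S$, $[a,B]\le[c,D]$ holds if and only if $(a,B)\precsim(c,D)$.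
   Context: A specialization semilattice is a triple $\mathbf S=(S,\vee,\sqsubseteq)$ where $(S,\vee)$ is a join-semilattice, with induced order $a\le b$ iff $a\vee b=b$, and $\sqsubseteq$ is a binary relation on $S$ such that for all $a,b,c,a_1\in S$: (S1) $a\le b$ implies $a\sqsubseteq b$; (S2) $a\sqsubseteq b$ and $b\sqsubseteq c$ imply $a\sqsubseteq c$; (S3) $a\sqsubseteq b$ and $a_1\sqsubseteq b$ imply $a\vee a_1\sqsubseteq b$. Write $\vee_S,\le_S,\sqsubseteq_S$ for the operations/relations of $\mathbf S$. Let $S^{<\omega}$ be the set of finite subsets of $S$. On $S\times S^{<\omega}$ define $(a,B)\precsim(c,D)$, where $D=\{d_1,\dots,d_k\}$ ($k\ge 0$), to hold iff (a1) there exist $d_1^*,\dots,d_k^*\in S$ with $d_j^*\sqsubseteq_S d_j$ for each $j\le k$ and $a\le_S c\vee_S d_1^*\vee_S\cdots\vee_S d_k^*$ (when $D=\emptyset$ this means $a\le_S c$); and (a2) for every $b\in B$ there is $d\in D$ with $b\sqsubseteq_S d$. Let $(a,B)\sim(c,D)$ iff $(a,B)\precsim(c,D)$ and $(c,D)\precsim(a,B)$. $\widetilde S$ denotes the set of $\sim$-classes and $[a,B]$ the class of $(a,B)$. *)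

(* Defs.v *)
From Stdlib Require Export List Ensembles Finite_sets.

Record SpecSL := {
  car :> Type;
  join : car -> car -> car;
  sq : car -> car -> Prop;
  joinA : forall x y z, join x (join y z) = join (join x y) z;
  joinC : forall x y, join x y = join y x;
  joinI : forall x, join x x = x;
  spec_S1 : forall a b, join a b = b -> sq a b;
  spec_S2 : forall a b c, sq a b -> sq b c -> sq a c;
  spec_S3 : forall a a1 b, sq a b -> sq a1 b -> sq (join a a1) b
}.

Arguments join {s} _ _.
Arguments sq {s} _ _.

Definition le {S : SpecSL} (a b : S) : Prop := join a b = b.

(* A finite subset D of S is represented as a (finite) predicate; a list
   [d_1;...;d_k] enumerates D if it lists its elements without repetition. *)
Definition enumerates {S : SpecSL} (D : Ensemble S) (l : list S) : Prop :=
  NoDup l /\ forall x, List.In x l <-> D x.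

Definition precsim {S : SpecSL} (a : S) (B : Ensemble S) (c : S) (D : Ensemble S) : Prop :=
  (exists (ld lstar : list S),
      enumerates D ld /\
      Forall2 (fun x d => sq x d) lstar ld /\
      le a (fold_right join c lstar)) /\
  (forall b, B b -> exists d, D d /\ sq b d).

Definition sim {S : SpecSL} (a : S) (B : Ensemble S) (c : S) (D : Ensemble S) : Prop :=
  precsim a B c D /\ precsim c D a B.

(* Main.v *)
Require Import Defs.
From Stdlib Require Import Finite_sets_facts.

Notation L c l := (fold_right join c l).

Lemma le_refl {S : SpecSL} (a : S) : le a a.
Proof. apply joinI. Qed.

Lemma le_trans' {S : SpecSL} (a b c : S) : le a b -> le b c -> le a c.
Proof. unfold le; intros H1 H2. rewrite <- H2, joinA, H1. reflexivity. Qed.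

Lemma le_joinl {S : SpecSL} (a b : S) : le a (join a b).
Proof. unfold le. rewrite joinA, joinI. reflexivity. Qed.

Lemma le_joinr {S : SpecSL} (a b : S) : le b (join a b).
Proof. unfold le. rewrite (joinC _ a b), joinA, joinI. reflexivity. Qed.

Lemma le_lub {S : SpecSL} (a b c : S) : le a c -> le b c -> le (join a b) c.
Proof. unfold le; intros H1 H2. rewrite <- joinA, H2, H1. reflexivity. Qed.

Lemma le_L_base {S : SpecSL} (c : S) l : le c (L c l).
Proof.
  induction l as [|x l IH]; simpl. apply le_refl.
  eapply le_trans'. exact IH. apply le_joinr.
Qed.

Lemma le_L_in {S : SpecSL} (c e : S) l : List.In e l -> le e (L c l).
Proof.
  induction l as [|x l IH]; simpl. tauto.
  intros [<-|H]. apply le_joinl. eapply le_trans'. apply IH, H. apply le_joinr.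
Qed.

Lemma le_L_lub {S : SpecSL} (c y : S) l :
  le c y -> (forall e, List.In e l -> le e y) -> le (L c l) y.
Proof.
  induction l as [|x l IH]; simpl; intros Hc He. exact Hc.
  apply le_lub. apply He; auto. apply IH; auto.
Qed.

Lemma le_L_mono {S : SpecSL} (c c' : S) l l' :
  le c c' -> (forall e, List.In e l -> List.In e l') -> le (L c l) (L c' l').
Proof.
  intros H1 H2. apply le_L_lub.
  eapply le_trans'. exact H1. apply le_L_base.
  intros e He. apply le_L_in; auto.
Qed.

Lemma sq_L {S : SpecSL} (c y : S) l :
  sq c y -> (forall e, List.In e l -> sq e y) -> sq (L c l) y.
Proof.
  induction l as [|x l IH]; simpl; intros Hc He. exact Hc.
  apply spec_S3. apply He; auto. apply IH; auto.
Qed.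

Lemma sq_of_le {S : SpecSL} (a b : S) : le a b -> sq a b.
Proof. apply spec_S1. Qed.

Lemma star_add {S : SpecSL} (c e d : S) : forall lstar ld,
  Forall2 (fun x d => sq x d) lstar ld -> List.In d ld -> sq e d ->
  exists lstar', Forall2 (fun x d => sq x d) lstar' ld /\ L c lstar' = join e (L c lstar).
Proof.
  intros lstar ld H. induction H as [|x d0 ls ld Hx Hr IH]; simpl. tauto.
  intros [<-|Hin] He.
  - exists (join e x :: ls). split. constructor; auto. apply spec_S3; auto.
    simpl. rewrite joinA. reflexivity.
  - destruct (IH Hin He) as [ls' [H1 H2]]. exists (x :: ls'). split. constructor; auto.
    simpl. rewrite H2, !joinA, (joinC _ x e). reflexivity.
Qed.

Lemma A1_intro {S : SpecSL} (D : Ensemble S) ld (c : S) l :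
  enumerates D ld -> Forall (fun e => exists d, D d /\ sq e d) l ->
  exists lstar, Forall2 (fun x d => sq x d) lstar ld /\ le (L c l) (L c lstar).
Proof.
  intros [Hnd Hen] Hl. induction Hl as [|e l [d [Hd He]] Hl IH].
  - exists ld. split. clear. induction ld; constructor; auto. apply spec_S1, joinI.
    apply le_L_base.
  - destruct IH as [ls [H1 H2]].
    destruct (star_add c e d ls ld H1 (proj2 (Hen d) Hd) He) as [ls' [H3 H4]].
    exists ls'. split; auto. simpl. rewrite H4. apply le_lub. apply le_joinl.
    eapply le_trans'. exact H2. apply le_joinr.
Qed.

Definition a1' {S : SpecSL} (a c : S) (D : Ensemble S) :=
  exists l, Forall (fun e => exists d, D d /\ sq e d) l /\ le a (L c l).

Lemma precsim_iff {S : SpecSL} (a c : S) B D :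
  precsim a B c D <->
  ((exists ld, enumerates D ld) /\ a1' a c D /\ (forall b, B b -> exists d, D d /\ sq b d)).
Proof.
  split.
  - intros [[ld [ls [Hen [Hf Hle]]]] Ha2]. split. eauto. split; auto.
    exists ls. split; auto. clear Hle. destruct Hen as [_ Hen].
    assert (Hin : forall d, List.In d ld -> D d) by (intros; apply Hen; auto).
    clear Hen. induction Hf; constructor.
    exists y. split; auto. apply Hin. simpl; auto.
    apply IHHf. intros; apply Hin; simpl; auto.
  - intros [[ld Hen] [[l [Hl Hle]] Ha2]]. split; auto.
    destruct (A1_intro D ld c l Hen Hl) as [ls [H1 H2]].
    exists ld, ls. split; auto. split; auto. eapply le_trans'; eauto.
Qed.

Lemma finite_enum {S : SpecSL} (X : Ensemble S) : Finite S X -> exists l, enumerates X l.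
Proof.
  induction 1 as [|A Hf [l [Hnd Hen]] x Hx].
  - exists nil. split. constructor. intros x; split; simpl; [tauto| intros []].
  - exists (x :: l). split. constructor; auto. rewrite Hen. exact Hx.
    intros y. simpl. rewrite Hen. split.
    + intros [<-|H]. right. constructor. left. exact H.
    + intros H; destruct H as [y H|y H]. right; exact H. destruct H. left; reflexivity.
Qed.

Lemma pre_refl {S : SpecSL} (a : S) B : (exists l, enumerates B l) -> precsim a B a B.
Proof.
  intros He. apply precsim_iff. split; auto. split.
  exists nil. split. constructor. apply le_refl.
  intros b Hb. exists b. split; auto. apply sq_of_le, le_refl.
Qed.

Lemma pre_trans {S : SpecSL} (a c e : S) B D E :
  precsim a B c D -> precsim c D e E -> precsim a B e E.
Proof.
  rewrite !precsim_iff.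
  intros [_ [[l1 [Hl1 H1]] H2]] [HE [[l2 [Hl2 H3]] H4]].
  split; auto. split.
  - exists (l1 ++ l2). split.
    + apply Forall_app. split; auto.
      eapply Forall_impl; [|exact Hl1]. intros x [d [Hd Hxd]].
      destruct (H4 d Hd) as [f [Hf Hdf]]. exists f. split; auto. eapply spec_S2; eauto.
    + eapply le_trans'. exact H1. rewrite fold_right_app.
      apply le_L_mono; auto.
  - intros b Hb. destruct (H2 b Hb) as [d [Hd Hbd]].
    destruct (H4 d Hd) as [f [Hf Hdf]]. exists f. split; auto. eapply spec_S2; eauto.
Qed.

Lemma sq_L_of_a1 {S : SpecSL} (a c : S) D ld :
  enumerates D ld -> a1' a c D -> sq a (L c ld).
Proof.
  intros [_ Hen] [l [Hl Hle]].
  eapply spec_S2. apply sq_of_le. exact Hle.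
  apply sq_L. apply sq_of_le, le_L_base.
  intros e He. rewrite Forall_forall in Hl. destruct (Hl e He) as [d [Hd Hed]].
  eapply spec_S2. exact Hed. apply sq_of_le, le_L_in, Hen, Hd.
Qed.

Lemma enum_single {S : SpecSL} (x : S) : enumerates (Singleton S x) (x :: nil).
Proof.
  split. constructor. simpl; tauto. constructor.
  intros y; simpl; split. intros [<-|[]]; constructor. intros H; destruct H; auto.
Qed.

Lemma K_half {S : SpecSL} (a c : S) B D lb ld :
  enumerates B lb -> enumerates D ld -> precsim a B c D ->
  precsim a (Singleton S (L a lb)) c (Singleton S (L c ld)).
Proof.
  intros HB HD H. apply precsim_iff in H. destruct H as [_ [H1 H2]].
  assert (Ha : sq a (L c ld)) by (eapply sq_L_of_a1; eauto).
  apply precsim_iff. split. eexists; apply enum_single. split.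
  - exists (a :: nil). split. constructor; auto. exists (L c ld). split; auto. constructor.
    simpl. apply le_joinl.
  - intros b Hb. destruct Hb. exists (L c ld). split. constructor.
    apply sq_L; auto. intros e He. apply HB in He. destruct (H2 e He) as [d [Hd Hed]].
    eapply spec_S2. exact Hed. apply sq_of_le, le_L_in, HD, Hd.
Qed.

Lemma pre_cong {S : SpecSL} (a a' c c' : S) B B' D D' :
  Finite S B' -> Finite S D' -> precsim a B a' B' -> precsim c D c' D' ->
  precsim (join a c) (Union S B D) (join a' c') (Union S B' D').
Proof.
  intros FB FD H1 H2. rewrite precsim_iff in *.
  destruct H1 as [_ [[l1 [Hl1 Hle1]] H1]], H2 as [_ [[l2 [Hl2 Hle2]] H2]].
  split. apply finite_enum, Union_preserves_Finite; auto. split.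
  - exists (l1 ++ l2). split. apply Forall_app. split.
    + eapply Forall_impl; [|exact Hl1]. intros x [d [Hd Hxd]]. exists d. split; auto. left; auto.
    + eapply Forall_impl; [|exact Hl2]. intros x [d [Hd Hxd]]. exists d. split; auto. right; auto.
    + apply le_lub.
      * eapply le_trans'. exact Hle1. apply le_L_mono. apply le_joinl.
        intros; apply in_or_app; auto.
      * eapply le_trans'. exact Hle2. apply le_L_mono. apply le_joinr.
        intros; apply in_or_app; auto.
  - intros b Hb. destruct Hb as [b Hb|b Hb].
    + destruct (H1 b Hb) as [d [Hd Hbd]]. exists d. split; auto. left; auto.
    + destruct (H2 b Hb) as [d [Hd Hbd]]. exists d. split; auto. right; auto.
Qed.

Theorem lemma3p6 (S : SpecSL) :
  (* (i) ≾ reflexive and transitive on S × S^{<ω}; hence ~ is an equivalence *)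
  ((forall (a : S) (B : Ensemble S), Finite S B -> precsim a B a B) /\
   (forall (a c e : S) (B D E : Ensemble S),
      Finite S B -> Finite S D -> Finite S E ->
      precsim a B c D -> precsim c D e E -> precsim a B e E) /\
   (forall (a : S) (B : Ensemble S), Finite S B -> sim a B a B) /\
   (forall (a c : S) (B D : Ensemble S),
      Finite S B -> Finite S D -> sim a B c D -> sim c D a B) /\
   (forall (a c e : S) (B D E : Ensemble S),
      Finite S B -> Finite S D -> Finite S E ->
      sim a B c D -> sim c D e E -> sim a B e E)) /\
  (* (ii) K[a,{b_1..b_h}] = [a,{a \/ b_1 \/ ... \/ b_h}] is well defined *)
  (forall (a c : S) (B D : Ensemble S) (lb ld : list S),
      enumerates B lb -> enumerates D ld ->
      sim a B c D ->
      sim a (Singleton S (fold_right join a lb))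
          c (Singleton S (fold_right join c ld))) /\
  (* (iii) ~ is a congruence of (S, \/) × (S^{<ω}, ∪) *)
  (forall (a a' c c' : S) (B B' D D' : Ensemble S),
      Finite S B -> Finite S B' -> Finite S D -> Finite S D' ->
      sim a B a' B' -> sim c D c' D' ->
      sim (join a c) (Union S B D) (join a' c') (Union S B' D')) /\
  (* and for the induced order on the quotient:
     [a,B] <= [c,D]  (i.e. [a \/ c, B ∪ D] = [c,D])  iff  (a,B) ≾ (c,D) *)
  (forall (a c : S) (B D : Ensemble S),
      Finite S B -> Finite S D ->
      (sim (join a c) (Union S B D) c D <-> precsim a B c D)).
Proof.
  split; [|split; [|split]].
  - split; [|split; [|split; [|split]]].
    + intros; apply pre_refl, finite_enum; auto.
    + intros; eapply pre_trans; eauto.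
    + intros a B HB; split; apply pre_refl, finite_enum; auto.
    + intros a c B D _ _ [H1 H2]; split; auto.
    + intros a c e B D E _ _ _ [H1 H2] [H3 H4]; split; eapply pre_trans; eauto.
  - intros a c B D lb ld HB HD [H1 H2]; split; eapply K_half; eauto.
  - intros a a' c c' B B' D D' FB FB' FD FD' [H1 H2] [H3 H4]; split; apply pre_cong; auto.
  - intros a c B D FB FD. split.
    + intros [H _]. rewrite precsim_iff in *. destruct H as [HE [[l [Hl Hle]] H2]].
      split; auto. split. exists l. split; auto. eapply le_trans'. apply le_joinl. exact Hle.
      intros b Hb. apply H2. left; auto.
    + intros H. pose proof H as H0. rewrite precsim_iff in H.
      destruct H as [HE [[l [Hl Hle]] H2]]. split; apply precsim_iff.
      * split; auto. split. exists l. split; auto. apply le_lub; auto. apply le_L_base.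
        intros b Hb; destruct Hb as [b Hb|b Hb]. auto.
        exists b. split; auto. apply sq_of_le, le_refl.
      * split. apply finite_enum, Union_preserves_Finite; auto. split.
        exists nil. split. constructor. apply le_joinr.
        intros d Hd. exists d. split. right; auto. apply sq_of_le, le_refl.
Qed.
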